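(* For $m,n\in\mathbb{N}$ (positive integers) let \[ C_m^n:=\left|\left\{(i_1,\dots,i_m)\in\{1,\dots,n\}^m:\ \forall j\in\{1,\dots,m\}\ \exists j'\in\{1,\dots,m\},\ j'\neq j,\ i_j=i_{j'}\right\}\right|. \] Then $C_m^n\leq m!\left(\frac n2\right)^{\lfloor m/2\rfloor}$. *)

(* Defs.v *)
From mathcomp Require Import all_boot all_order all_algebra.
Set Implicit Arguments. Unset Strict Implicit. Unset Printing Implicit Defensive.
Import GRing.Theory Num.Theory.

(* C_m^n : number of maps i : {1..m} -> {1..n} (indices shifted to 0-based
   ordinals 'I_m, 'I_n) such that every value taken is taken at least twice:
   for all j there is j' <> j with i j = i j'. *)
Definition C (m n : nat) : nat :=
  #|[set i : {ffun 'I_m -> 'I_n} |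
      [forall j : 'I_m, exists j' : 'I_m, (j' != j) && (i j == i j')]]|.

(* Main.v *)
Require Import Defs.
From mathcomp Require Import all_boot all_order all_algebra.
Set Implicit Arguments. Unset Strict Implicit. Unset Printing Implicit Defensive.
Definition good k n (f : {ffun 'I_k -> 'I_n}) : bool :=
  [forall j, exists j', (j' != j) && (f j == f j')].

Lemma image_bound k n (g : {ffun 'I_k -> 'I_n}) : good g ->
  (#|[set v | v \in codom g]| * 2 <= k)%N.
Proof.
move=> /forallP gg.
apply: (@leq_trans (\sum_(x : 'I_k) 1)%N); last by rewrite sum1_card card_ord.
rewrite (partition_big g (mem [set v | v \in codom g])) /=; last first.
  by move=> i _; rewrite inE codom_f.
rewrite -sum_nat_const; apply: leq_sum => v; rewrite inE => /codomP [x0 ->].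
rewrite sum1_card.
have [x1 /andP [ne e]] := existsP (gg x0).
have <- : #|[set x0; x1]| = 2 by rewrite cards2 eq_sym ne.
apply: subset_leq_card; apply/subsetP => y; rewrite !inE => /orP [] /eqP ->.
  by rewrite unfold_in /=; apply/eqnP.
by rewrite unfold_in /=; apply/eqnP; rewrite (eqP e).
Qed.

Definition G k n := [set f : {ffun 'I_k -> 'I_n} | good f].
Definition rs k n (f : {ffun 'I_k.+1 -> 'I_n}) : {ffun 'I_k -> 'I_n} :=
  [ffun j => f (lift ord_max j)].

Lemma S3_bound k n :
  (#|[set f in G k.+1 n | rs f \in G k n]| <= k./2 * #|G k n|)%N.
Proof.
pose phi (f : {ffun 'I_k.+1 -> 'I_n}) := (rs f, f ord_max).
have inj : injective phi.
  move=> f1 f2 [e1 e2]; apply/ffunP => i.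
  case: (unliftP ord_max i) => [j ->|->] //.
  by have := congr1 (fun g : {ffun 'I_k -> 'I_n} => g j) e1; rewrite !ffunE.
rewrite -(card_imset _ inj).
pose P := [set p : {ffun 'I_k -> 'I_n} * 'I_n | (p.1 \in G k n) && (p.2 \in codom p.1)].
apply: (@leq_trans #|P|).
  apply: subset_leq_card; apply/subsetP => p /imsetP [f]; rewrite !inE => /andP [gf rf] ->.
  rewrite rf /=; move: gf => /forallP /(_ ord_max) /existsP [j' /andP [ne e]].
  case: (unliftP ord_max j') ne e => [j ->|->]; last by rewrite eqxx.
  move=> _ /eqP ->; apply/codomP; exists j; by rewrite ffunE.
have -> : #|P| = (\sum_(g in G k n) \sum_(v | v \in codom g) 1)%N.
  by rewrite pair_big_dep /= -sum1_card; apply: eq_bigl => p; rewrite inE.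
rewrite mulnC -sum_nat_const; apply: leq_sum => g; rewrite inE => gg.
rewrite sum1_card geq_half_double -mul2n mulnC.
have := image_bound gg.
by apply: leq_trans; rewrite leq_eqVlt; apply/orP; left; apply/eqP; congr (_ * _)%N; apply: eq_card => v; rewrite inE.
Qed.

Lemma S2_bound k n :
  (#|[set f in G k.+2 n | rs f \notin G k.+1 n]| <= k.+1 * n * #|G k n|)%N.
Proof.
pose pj (f : {ffun 'I_k.+2 -> 'I_n}) :=
  odflt ord0 [pick j | f (lift ord_max j) == f ord_max].
pose hf (f : {ffun 'I_k.+2 -> 'I_n}) : {ffun 'I_k -> 'I_n} :=
  [ffun i => f (lift ord_max (lift (pj f) i))].
pose phi f := (pj f, f ord_max, hf f).
set S2 := [set f in _ | _].
have key : forall f, f \in S2 ->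
   f (lift ord_max (pj f)) = f ord_max /\
   forall k1, f (lift ord_max k1) == f ord_max -> k1 = pj f.
  move=> f; rewrite !inE => /andP [/forallP gf].
  move=> /forallPn [k0 /existsPn nk0].
  have U : forall k1, f (lift ord_max k1) == f (lift ord_max k0) -> k1 = k0.
    move=> k1 e; apply/eqP; apply: contraT => ne.
    by have := nk0 k1; rewrite ne /= ffunE ffunE eq_sym e.
  have [j' /andP [ne e]] := existsP (gf (lift ord_max k0)).
  case: (unliftP ord_max j') ne e => [j1 ->|->] ne e.
    by move: ne; rewrite (U j1) ?eqxx // eq_sym.
  have E0 : f (lift ord_max k0) = f ord_max by apply/eqP.
  have U' : forall k1, f (lift ord_max k1) == f ord_max -> k1 = k0.
    by move=> k1; rewrite -E0; apply: U.
  have pk : pj f = k0.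
    rewrite /pj; case: pickP => [j /U' -> //|/(_ k0)]; by rewrite E0 eqxx.
  by rewrite pk; split.
have inj : {in S2 &, injective phi}.
  move=> f1 f2 h1 h2 [ej ev eh]; have [a1 _] := key _ h1; have [a2 _] := key _ h2.
  apply/ffunP => i; case: (unliftP ord_max i) => [i1 ->|->] //.
  case: (unliftP (pj f1) i1) => [i2 ->|->].
    by have := congr1 (fun g : {ffun 'I_k -> 'I_n} => g i2) eh; rewrite !ffunE -ej.
  by rewrite a1 ev ej a2.
rewrite -(card_in_imset inj).
apply: (@leq_trans #|setX (setX [set: 'I_k.+1] [set: 'I_n]) (G k n)|); last first.
  by rewrite !cardsX !cardsT !card_ord.
apply: subset_leq_card; apply/subsetP => p /imsetP [f hf' ->]; rewrite !inE /=.
have [a U] := key f hf'. move: hf'; rewrite !inE => /andP [/forallP gf _].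
apply/forallP => i; set a0 := lift ord_max (lift (pj f) i).
have [b /andP [ne e]] := existsP (gf a0).
case: (unliftP ord_max b) ne e => [b1 ->|->] ne e; last first.
  by move: (U _ e) => /eqP; rewrite eq_sym (negbTE (neq_lift _ _)).
case: (unliftP (pj f) b1) ne e => [b2 ->|->] ne e; last first.
  by rewrite a in e; move: (U _ e) => /eqP; rewrite eq_sym (negbTE (neq_lift _ _)).
apply/existsP; exists b2; rewrite !ffunE e andbT.
by apply: contra ne => /eqP ->.
Qed.

Lemma CG k n : C k n = #|G k n|. Proof. by []. Qed.

Lemma C_rec k n :
  (C k.+2 n <= k.+1 * n * C k n + (k.+1)./2 * C k.+1 n)%N.
Proof.
rewrite !CG -(cardsID [set f | rs f \in G k.+1 n] (G k.+2 n)) addnC.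
apply: leq_add.
  apply: leq_trans (S2_bound k n); rewrite setDE setIdE; apply: subset_leq_card; apply/subsetP => f; rewrite !inE; by [].
by apply: leq_trans (S3_bound k.+1 n); rewrite -setIdE.
Qed.

Lemma C0 n : (C 0 n <= 1)%N.
Proof. rewrite CG; apply: (leq_trans (max_card _)); by rewrite card_ffun !card_ord. Qed.

Lemma C1 n : C 1 n = 0%N.
Proof.
rewrite CG; apply/eqP; rewrite cards_eq0; apply/eqP/setP => f; rewrite !inE.
apply/negP => /forallP /(_ ord0) /existsP [j /andP [ne _]].
by move: ne; rewrite (ord1 j) eqxx.
Qed.

From mathcomp Require Import ring lra.
Import Order.TTheory GRing.Theory Num.Theory.
Local Open Scope ring_scope.

Definition B n m : rat := (m`!)%:R * ((n%:R / 2) ^+ m./2).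

Lemma main_bound n (hn : (0 < n)%N) k :
  ((C k.*2 n)%:R : rat) <= B n k.*2 /\ ((C k.*2.+1 n)%:R : rat) <= B n k.*2.+1.
Proof.
set x : rat := n%:R / 2.
have x12 : 1 / 2 <= x.
  rewrite /x ler_pM2r ?invr_gt0 // ler1n //.
have x0 : 0 <= x by apply: le_trans x12; lra.
have Bd : forall k, B n k.*2 = (k.*2)`!%:R * x ^+ k.
  by move=> k0; rewrite /B doubleK.
have Bd1 : forall k, B n k.*2.+1 = (k.*2.+1)%:R * (k.*2)`!%:R * x ^+ k.
  by move=> k0; rewrite /B factS natrM /= uphalf_double.
elim: k => [|k [h0 h1]].
  split; first by rewrite Bd expr0 mulr1 fact0 ler_nat C0.
  by rewrite C1 /B; apply: mulr_ge0 => //; apply: exprn_ge0.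
set F : rat := (k.*2)`!%:R.
have F0 : 0 <= F by [].
have X0 : 0 <= x ^+ k by apply: exprn_ge0.
set X := x ^+ k in X0.
set K : rat := k%:R.
have K0 : 0 <= K by [].
have d2 : (k.*2)%:R = 2 * K :> rat by rewrite -mul2n natrM.
have nx : n%:R = 2 * x :> rat by rewrite /x; field.
rewrite Bd in h0; rewrite Bd1 -/F -/X -[(k.*2.+1)%:R]natr1 d2 in h1.
have E2 : B n k.+1.*2 = (2 * K + 2) * (2 * K + 1) * F * (X * x).
  rewrite Bd doubleS !factS !natrM exprSr -/F -/X.
  rewrite -!natr1 d2; ring.
have c2 : (C k.+1.*2 n)%:R <= B n k.+1.*2.
  have eh : (k.*2.+1)./2 = k by rewrite /= uphalf_double.
  have r := C_rec k.*2 n; rewrite eh -(ler_nat rat) natrD !natrM in r.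
  rewrite doubleS; apply: (le_trans r); rewrite -doubleS E2.
  rewrite -[(k.*2.+1)%:R]natr1 d2 nx -/K.
  apply: (@le_trans _ _ ((2 * K + 1) * (2 * x) * (F * X) + K * ((2 * K + 1) * F * X))).
    apply: lerD; apply: ler_wpM2l => //.
      by apply: mulr_ge0; lra.
  rewrite -subr_ge0.
  have -> : (2 * K + 2) * (2 * K + 1) * F * (X * x) -
      ((2 * K + 1) * (2 * x) * (F * X) + K * ((2 * K + 1) * F * X)) =
      (2 * K + 1) * F * X * K * (2 * x - 1) by ring.
  by repeat apply: mulr_ge0 => //; lra.
split => //.
have E3 : B n k.+1.*2.+1 = (2 * K + 3) * (2 * K + 2) * (2 * K + 1) * F * (X * x).
  rewrite Bd1 doubleS !factS !natrM exprSr -/F -/X.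
  rewrite -!natr1 d2; ring.
rewrite E2 in c2.
have eh : (k.*2.+2)./2 = k.+1 by rewrite -doubleS doubleK.
have r := C_rec k.*2.+1 n; rewrite eh -(ler_nat rat) natrD !natrM in r.
rewrite doubleS; apply: (le_trans r); rewrite -doubleS E3 doubleS.
rewrite -!natr1 d2 nx -/K.
apply: (@le_trans _ _ ((2 * K + 1 + 1) * (2 * x) * ((2 * K + 1) * F * X) +
   (K + 1) * ((2 * K + 2) * (2 * K + 1) * F * (X * x)))).
  apply: lerD; apply: ler_wpM2l => //.
    by apply: mulr_ge0; lra.
  by lra.
rewrite -subr_ge0.
have -> : (2 * K + 3) * (2 * K + 2) * (2 * K + 1) * F * (X * x) -
    ((2 * K + 1 + 1) * (2 * x) * ((2 * K + 1) * F * X) +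
     (K + 1) * ((2 * K + 2) * (2 * K + 1) * F * (X * x))) =
    (2 * K + 2) * (2 * K + 1) * F * X * x * K by ring.
by repeat apply: mulr_ge0 => //; lra.
Qed.

Theorem lemma5p5 (m n : nat) (hm : (0 < m)%N) (hn : (0 < n)%N) :
  ((C m n)%:R : rat) <= (m`!)%:R * ((n%:R / 2) ^+ (m./2)).
Proof.
change (((C m n)%:R : rat) <= B n m).
have [h0 h1] := main_bound hn m./2.
case: (boolP (odd m)) => o.
  by rewrite -(odd_double_half m) o add1n.
by rewrite -(odd_double_half m) (negbTE o) add0n.
Qed.
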